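(* There is a function $g(n)\to 0$ as $n\to\infty$ such that the following holds for all $n$, all $\delta\in[0,1]$ and $\eta>0$: if $F\subseteq E(K_n)$ satisfies $|F|>(1-\delta)n^2/4$ and $|F\setminus\Pi|>\eta n^2$ for every cut $\Pi$ of $K_n$, then $\tau(F)>\tfrac{1}{12}(\eta-3\delta-g(n))n^3$.
   Context: $K_n$ is the complete graph on $[n]$. A cut of $K_n$ is a set $\Pi=\nabla(W,[n]\setminus W)$ of all edges of $K_n$ joining $W$ and $[n]\setminus W$, for some $W\subseteq[n]$ (including $W=\emptyset$). $\tau(F)$ is the number of triangles of $K_n$ all of whose three edges lie in $F$. *)

(* Defs.v *)
From mathcomp Require Import all_boot all_order all_algebra.
From mathcomp Require Import all_classical all_reals all_analysis.
Set Implicit Arguments. Unset Strict Implicit. Unset Printing Implicit Defensive.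

Definition Kedges (n : nat) : {set {set 'I_n}} := [set e : {set 'I_n} | #|e| == 2].

Definition Kcut (n : nat) (W : {set 'I_n}) : {set {set 'I_n}} :=
  [set e in Kedges n | #|e :&: W| == 1].

Definition ntri (n : nat) (F : {set {set 'I_n}}) : nat :=
  #|[set t : {set 'I_n} | (#|t| == 3) &&
      [forall e : {set 'I_n}, ((e \subset t) && (#|e| == 2)) ==> (e \in F)]]|.

(* Main.v *)
Require Import Defs.
From mathcomp Require Import all_boot all_order all_algebra.
Set Implicit Arguments. Unset Strict Implicit.

Lemma card_sumT (T : finType) (A : {set T}) : #|A| = \sum_w (w \in A : nat).
Proof. by rewrite -sum1_card big_mkcond /=; apply eq_bigr => w _; case: (w \in A). Qed.


Definition nb (n : nat) (F : {set {set 'I_n}}) (v : 'I_n) : {set 'I_n} := [set u | [set v; u] \in F].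

Lemma edge_card (n : nat) (F : {set {set 'I_n}}) (hF : F \subset Kedges n)  e : e \in F -> #|e| = 2.
Proof. by move=> /(subsetP hF); rewrite inE => /eqP. Qed.

Lemma nb_sym (n : nat) (F : {set {set 'I_n}})  u v : (u \in nb F v) = (v \in nb F u).
Proof. by rewrite !inE setUC. Qed.

Lemma nb_irr (n : nat) (F : {set {set 'I_n}}) (hF : F \subset Kedges n)  v : v \notin nb F v.
Proof. by rewrite inE setUid; apply/negP => /(edge_card hF); rewrite cards1. Qed.

Lemma deg_edges (n : nat) (F : {set {set 'I_n}}) (hF : F \subset Kedges n)  w : #|nb F w| = #|[set e in F | w \in e]|.
Proof.
rewrite -(card_in_imset (f := fun u => [set w; u])); last first.
  move=> u u' Hu Hu' E.
  have : u \in [set w; u'] by rewrite -E set22.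
  rewrite !inE => /orP[/eqP uw|/eqP //].
  by move: Hu; rewrite uw (negbTE (nb_irr hF w)).
suff -> : [set [set w; u] | u in nb F w] = [set e in F | w \in e] by [].
apply/eqP; rewrite eqEsubset; apply/andP; split.
  apply/subsetP=> _ /imsetP[u Hu ->]; rewrite inE.
  by rewrite inE in Hu; rewrite Hu set21.
apply/subsetP=> e; rewrite inE=> /andP[eF we].
have /cards2P[x [y [xy ee]]] : #|e| == 2 by rewrite (edge_card hF).
move: we eF; rewrite ee !inE => /orP[/eqP->|/eqP->] eF; apply/imsetP.
  by exists y; rewrite ?inE.
by exists x; rewrite ?inE setUC.
Qed.

Lemma card_sum (n : nat) (A B : {set 'I_n}) : #|A :&: B| = \sum_w ((w \in A) * (w \in B)).
Proof.
rewrite -sum1_card big_mkcond /=; apply eq_bigr => w _.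
by rewrite inE; case: (w \in A); case: (w \in B).
Qed.

Lemma card_sum1 (n : nat)  (A : {set 'I_n}) : #|A| = \sum_w (w \in A : nat).
Proof. by rewrite -sum1_card big_mkcond /=; apply eq_bigr => w _; case: (w \in A). Qed.

Lemma deg_sum (n : nat) (F : {set {set 'I_n}}) (hF : F \subset Kedges n)  w : #|nb F w| = \sum_(e in F) (w \in e : nat).
Proof.
rewrite (deg_edges hF) -sum1_card big_mkcond /= [RHS]big_mkcond /=.
by apply eq_bigr => e _; rewrite inE; case: (e \in F); case: (w \in e).
Qed.

Lemma handshake (n : nat) (F : {set {set 'I_n}}) (hF : F \subset Kedges n)  : \sum_w #|nb F w| = 2 * #|F|.
Proof.
under eq_bigr do rewrite (deg_sum hF).
rewrite exchange_big /= mulnC -sum_nat_const.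
apply eq_bigr => e eF; by rewrite -card_sum1 (edge_card hF).
Qed.

Lemma sumsq (n : nat) (F : {set {set 'I_n}}) (hF : F \subset Kedges n)  : \sum_v \sum_(e in F) #|e :&: nb F v| = \sum_w #|nb F w| * #|nb F w|.
Proof.
under eq_bigr do under eq_bigr do rewrite card_sum.
rewrite exchange_big /=.
under eq_bigr do rewrite exchange_big /=.
under eq_bigr do under eq_bigr do rewrite -big_distrr /=.
under eq_bigr do under eq_bigr do (under eq_bigr do rewrite nb_sym; rewrite -card_sum1).
rewrite exchange_big /=.
apply eq_bigr => w _.
by rewrite -big_distrl /= -(deg_sum hF).
Qed.

Lemma per_v (n : nat) (F : {set {set 'I_n}}) (hF : F \subset Kedges n)  A : #|F :\: Kcut A| + \sum_(e in F) #|e :&: A|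
  = #|F| + 2 * #|[set e in F | e \subset A]|.
Proof.
have -> : #|F :\: Kcut A| = \sum_(e in F) (#|e :&: A| != 1 : nat).
  rewrite -sum1_card big_mkcond /= [RHS]big_mkcond /=.
  apply eq_bigr => e _; rewrite !inE.
  case eF: (e \in F); rewrite ?andbF //= andbT.
  by have := subsetP hF e eF; rewrite inE => ->.
have -> : #|[set e in F | e \subset A]| = \sum_(e in F) (e \subset A : nat).
  rewrite -sum1_card big_mkcond /= [RHS]big_mkcond /=.
  by apply eq_bigr => e _; rewrite !inE; case: (e \in F); case: (e \subset A).
rewrite -big_split /= -sum1_card big_distrr -big_split /=.
apply eq_bigr => e eF.
have ec := edge_card hF eF.
have le2 : #|e :&: A| <= 2 by rewrite -ec subset_leq_card // subsetIl.
have sE : (e \subset A) = (#|e :&: A| == 2).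
  rewrite -ec; apply/idP/eqP => [/setIidPl -> // | H].
  by apply/setIidPl/eqP; rewrite eqEcard subsetIl H leqnn.
rewrite sE; move: le2; case: #|e :&: A| => [|[|[|k]]] //.
Qed.

Definition tris (n : nat) (F : {set {set 'I_n}}) := [set t : {set 'I_n} | (#|t| == 3) &&
      [forall e : {set 'I_n}, ((e \subset t) && (#|e| == 2)) ==> (e \in F)]].

Lemma tri_v (n : nat) (F : {set {set 'I_n}}) (hF : F \subset Kedges n)  v : #|[set e in F | e \subset nb F v]| <= #|[set t in tris F | v \in t]|.
Proof.
rewrite -(card_in_imset (f := fun e => v |: e)); last first.
  move=> e e' He He' E.
  have vn : forall x, x \in [set e in F | e \subset nb F v] -> v \notin x.
    move=> x; rewrite inE => /andP[_ /subsetP s]; apply/negP=> /s.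
    by rewrite (negbTE (nb_irr hF v)).
  by rewrite -(setU1K (vn _ He)) E setU1K // vn.
apply: subset_leq_card; apply/subsetP=> _ /imsetP[e He ->].
move: He; rewrite inE => /andP[eF /subsetP s].
have vne : v \notin e by apply/negP=> /s; rewrite (negbTE (nb_irr hF v)).
rewrite inE setU11 andbT inE cardsU1 vne (edge_card hF) //=.
apply/forallP=> f; apply/implyP=> /andP[fs /cards2P[x [y [xy fE]]]].
move: fs; rewrite fE subUset !sub1set !in_setU1 => /andP[/orP[/eqP xv|xe] /orP[/eqP yv|ye]].
- by move: xy; rewrite xv yv eqxx.
- by have := s _ ye; rewrite inE xv.
- by have := s _ xe; rewrite inE yv setUC.
have /cards2P[a [b [ab eE]]] : #|e| == 2 by rewrite (edge_card hF).
suff -> : [set x; y] = e by [].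
apply/eqP; rewrite eqEcard subUset !sub1set xe ye /= cards2 xy (edge_card hF) //.
Qed.

Lemma tri_bound (n : nat) (F : {set {set 'I_n}}) (hF : F \subset Kedges n)  : \sum_v #|[set e in F | e \subset nb F v]| <= 3 * ntri F.
Proof.
apply: (@leq_trans (\sum_v #|[set t in tris F | v \in t]|)).
  by apply: leq_sum => v _; apply: (tri_v hF).
have -> : ntri F = #|tris F| by [].
rewrite mulnC -sum_nat_const.
under eq_bigr do rewrite card_sumT.
rewrite exchange_big /= leq_eqVlt; apply/orP; left; apply/eqP.
rewrite [RHS]big_mkcond /=; apply eq_bigr => t _.
case tT: (t \in tris F).
  have : #|t| = 3 by move: tT; rewrite inE => /andP[/eqP].
  by rewrite card_sum1 => <-; apply eq_bigr => v _; rewrite inE tT.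
by rewrite big1 // => v _; rewrite inE tT.
Qed.

From mathcomp Require Import all_classical all_reals all_analysis.
From mathcomp Require Import ring lra.
Import Order.TTheory GRing.Theory Num.Theory numFieldNormedType.Exports.
Local Open Scope ring_scope.

Theorem lemma3p3 (R : realType) :
  exists g : nat -> R, (g @ \oo --> 0)%classic /\
    forall (n : nat) (delta eta : R), 0 <= delta -> delta <= 1 -> 0 < eta ->
    forall F : {set {set 'I_n}}, F \subset Kedges n ->
      (1 - delta) * (n%:R ^+ 2) / 4%:R < #|F|%:R ->
      (forall W : {set 'I_n}, eta * (n%:R ^+ 2) < #|F :\: Kcut W|%:R) ->
      (eta - 3%:R * delta - g n) * (n%:R ^+ 3) / 12%:R < (ntri F)%:R.
Proof.
exists (fun _ => 0); split; first exact: cvg_cst.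
move=> n d e d0 d1 e0 F hF hm hW; rewrite subr0.
case: n F hF hm hW => [|n'] F hF hm hW.
  exfalso; have := hW (@finset.set0 _); rewrite expr0n /= mulr0 ltr0n.
  case/card_gt0P => x; rewrite inE => /andP[_ xF].
  have := edge_card hF xF; have := max_card (mem x); rewrite card_ord.
  by move=> H1 H2; move: H1; rewrite H2.
set n := n'.+1.
have E1 : (\sum_(v < n) #|F :\: Kcut (nb F v)| + \sum_(v < n) \sum_(e in F) #|e :&: nb F v|
   = n * #|F| + 2 * \sum_(v < n) #|[set e in F | e \subset nb F v]|)%N.
  rewrite -big_split /= (eq_bigr _ (fun v _ => per_v hF (nb F v))) big_split /=.
  by rewrite -big_distrr /= big_const_ord iter_addn_0 mulnC.
rewrite (sumsq hF) in E1.
have E2 := handshake hF.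
have E3 := tri_bound hF.
have hsum : n%:R * (e * n%:R^+2) < \sum_(v < n) (#|F :\: Kcut (nb F v)|)%:R :> R.
  have := @ltr_sum R _ (index_enum 'I_n) xpredT (fun _ => e * n%:R^+2)
     (fun v => (#|F :\: Kcut (nb F v)|)%:R) _ (fun v _ => hW _).
  rewrite big_const_ord iter_addr_0 mulr_natl; apply.
  by apply/hasP; exists ord0; rewrite ?mem_index_enum.
have hS : \sum_(w < n) (#|nb F w|%:R * #|nb F w|%:R) >=
    n%:R * \sum_(w < n) (#|nb F w|)%:R - n%:R * (n%:R ^+ 2 / 4) :> R.
  rewrite mulr_sumr.
  have -> : n%:R * (n%:R ^+ 2 / 4) = \sum_(w < n) (n%:R ^+ 2 / 4) :> R.
    by rewrite big_const_ord iter_addr_0 mulr_natl.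
  rewrite -sumrB; apply: ler_sum => w _.
  set x : R := (#|nb F w|)%:R; set N : R := n%:R.
  have : 0 <= (x - N / 2) ^+ 2 by apply: sqr_ge0.
  lra.
have {}E1 := congr1 (fun k => k%:R : R) E1.
rewrite /= natrD (natrD _ (n * _)) (natrM _ n) (natrM _ 2) !natr_sum in E1.
have {}E2 := congr1 (fun k => k%:R : R) E2.
rewrite /= (natrM _ 2) !natr_sum in E2.
rewrite -(ler_nat R) natrM natr_sum in E3.
have E4 : \sum_(w < n) (#|nb F w| * #|nb F w|)%:R = \sum_(w < n) (#|nb F w|%:R * #|nb F w|%:R) :> R.
  by apply eq_bigr => w _; rewrite natrM.
rewrite E4 in E1.
move: hsum hS E1 E2 E3 hm.
set A := \sum_(v < n) _; set S := \sum_(w < n) _; set D := \sum_(w < n) _.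
set X := \sum_(v < n) _; set T := (ntri F)%:R; set m := #|F|%:R; set N := n%:R.
have N0 : 0 < N by rewrite /N ltr0n.
move=> h1 h2 h3 h4 h5 h6.
have h7 : N * ((1 - d) * N ^+ 2 / 4) < N * m by rewrite ltr_pM2l.
have P0 : 0 < N ^+ 3 by apply: exprn_gt0.
have eP : 0 < e * N ^+ 3 by apply: mulr_gt0.
have dP : 0 <= d * N ^+ 3 by apply: mulr_ge0 => //; apply: ltW.
have Ee : N * (e * N ^+ 2) = e * N ^+ 3 by rewrite exprS; ring.
have Ed : N * ((1 - d) * N ^+ 2 / 4) = N ^+ 3 / 4 - d * N ^+ 3 / 4 by rewrite exprS; ring.
have Ef : N * (N ^+ 2 / 4) = N ^+ 3 / 4 by rewrite exprS; ring.
rewrite h4 Ef in h2; rewrite Ee in h1; rewrite Ed in h7.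
have Eg : (e - 3 * d) * N ^+ 3 / 12 = e * N ^+ 3 / 12 - d * N ^+ 3 / 4 by field.
rewrite Eg.
move: h1 h2 h3 h5 h7 eP dP.
set P := N ^+ 3; set eP3 := e * P; set dP3 := d * P; set Nm := N * m; set N2m := N * (2 * m).
have -> : N2m = 2 * Nm by rewrite /N2m /Nm; ring.
move=> *; lra.
Qed.
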